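(* Let $R$ be a hyperring. The topological space $X=\operatorname{Spec}R$ (with the Zariski topology) is disconnected if and only if $R$ has an element $e$ with $e^2=e$ and $e\notin\{0,1\}$.
   Context: A hyperoperation $+:H\times H\to\mathcal{P}^*(H)$ is extended to subsets by $A+B=\bigcup_{a\in A,b\in B}(a+b)$. A (canonical) hypergroup is a nonempty set with a commutative associative hyperoperation, a unique $0$ with $0+x=\{x\}$, unique inverses $-x$ with $0\in x+(-x)$, and reversibility $x\in y+z\iff z\in x+(-y)$; $x-y:=x+(-y)$. A hyperring $(R,+,\cdot,0,1)$ is a hypergroup $(R,+,0)$ with a commutative monoid $(R,\cdot,1)$ such that $x(y+z)=xy+xz$, $0x=0$, $0\neq1$. A hyperideal is a nonempty $I\subseteq R$ with $a-rb\subseteq I$ for $a,b\in I$, $r\in R$; it is prime if $I\neq R$ and $xy\in I\Rightarrow x\in I$ or $y\in I$. $\operatorname{Spec}R$ is the set of prime hyperideals, with the Zariski topology whose closed sets are exactly the sets $V(I)=\{\mathfrak{p}\in\operatorname{Spec}R\mid I\subseteq\mathfrak{p}\}$ for hyperideals $I$. *)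

(* Defs.v *)
Set Implicit Arguments.

(* A (canonical) hyperring.  [hadd x y z] means  z ∈ x + y. *)
Record hyperring := HyperRing {
  car :> Type;
  hadd : car -> car -> car -> Prop;
  hzero : car;
  hneg : car -> car;
  hmul : car -> car -> car;
  hone : car;
  hadd_nonempty : forall x y, exists z, hadd x y z;
  hadd_comm : forall x y z, hadd x y z <-> hadd y x z;
  hadd_assoc : forall x y z w,
      (exists u, hadd x y u /\ hadd u z w) <-> (exists v, hadd y z v /\ hadd x v w);
  hadd_zero : forall x z, hadd hzero x z <-> z = x;
  hzero_unique : forall o, (forall x z, hadd o x z <-> z = x) -> o = hzero;
  hneg_inv : forall x, hadd x (hneg x) hzero;
  hneg_unique : forall x y, hadd x y hzero -> y = hneg x;
  hadd_rev : forall x y z, hadd y z x <-> hadd x (hneg y) z;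
  hmul_comm : forall x y, hmul x y = hmul y x;
  hmul_assoc : forall x y z, hmul x (hmul y z) = hmul (hmul x y) z;
  hmul_one : forall x, hmul hone x = x;
  hmul_distr : forall x y z w,
      (exists u, hadd y z u /\ w = hmul x u) <-> hadd (hmul x y) (hmul x z) w;
  hmul_zero : forall x, hmul hzero x = hzero;
  hzero_neq_one : hzero <> hone
}.

Section Spec.
Variable R : hyperring.

Definition hyperideal (I : R -> Prop) : Prop :=
  (exists a, I a) /\
  forall a b r c, I a -> I b -> hadd R a (hneg R (hmul R r b)) c -> I c.

Definition prime_hyperideal (P : R -> Prop) : Prop :=
  hyperideal P /\ (exists x, ~ P x) /\
  forall x y, P (hmul R x y) -> P x \/ P y.

(* Subsets of Spec R are predicates on prime hyperideals (only their values at
   prime hyperideals matter).  V(I) = {p ∈ Spec R | I ⊆ p}. *)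
Definition V (I : R -> Prop) (p : R -> Prop) : Prop := forall x, I x -> p x.

Definition zariski_closed (C : (R -> Prop) -> Prop) : Prop :=
  exists I, hyperideal I /\
    forall p, prime_hyperideal p -> (C p <-> V I p).

Definition Spec_disconnected : Prop :=
  exists A B : (R -> Prop) -> Prop,
    zariski_closed A /\ zariski_closed B /\
    (exists p, prime_hyperideal p /\ A p) /\
    (exists p, prime_hyperideal p /\ B p) /\
    (forall p, prime_hyperideal p -> ~ (A p /\ B p)) /\
    (forall p, prime_hyperideal p -> A p \/ B p).

End Spec.

(* Main.v *)
Require Import Defs.
From Stdlib Require Import Classical.
From mathcomp Require Import ssreflect ssrfun ssrbool boolp classical_sets.

Local Notation ad := (hadd _) (only parsing).
Local Notation mu := (hmul _) (only parsing).
Local Notation ng := (hneg _) (only parsing).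

Lemma negK {R : hyperring} (x : R) : ng (ng x) = x.
Proof. symmetry; apply: hneg_unique; apply/hadd_comm; exact: hneg_inv. Qed.

Lemma neg0 (R : hyperring) : hneg R (hzero R) = hzero R.
Proof. have := hneg_inv R (hzero R); move/hadd_zero => <-. by []. Qed.

Lemma mulr0 {R : hyperring} (x : R) : mu x (hzero R) = hzero R.
Proof. by rewrite hmul_comm hmul_zero. Qed.

Lemma mulr1 {R : hyperring} (x : R) : mu x (hone R) = x.
Proof. by rewrite hmul_comm hmul_one. Qed.

Lemma distrF {R : hyperring} (x y z u : R) : ad y z u -> ad (mu x y) (mu x z) (mu x u).
Proof. move=> h; apply/hmul_distr; by exists u. Qed.

Lemma distrB {R : hyperring} (x y z w : R) : ad (mu x y) (mu x z) w -> exists u, ad y z u /\ w = mu x u.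
Proof. by move/hmul_distr. Qed.

Lemma mulrN {R : hyperring} (r b : R) : mu r (ng b) = ng (mu r b).
Proof.
apply: hneg_unique; have := distrF r _ _ _ (hneg_inv R b); by rewrite mulr0.
Qed.

Lemma mulNr {R : hyperring} (r b : R) : mu (ng r) b = ng (mu r b).
Proof. by rewrite hmul_comm mulrN hmul_comm. Qed.

Lemma addr0 {R : hyperring} (x z : R) : ad x (hzero R) z <-> z = x.
Proof. rewrite hadd_comm; exact: hadd_zero. Qed.

Lemma shuffle {R : hyperring} {x y z w u v c : R} :
  ad x y u -> ad z w v -> ad u v c ->
  exists u' v', ad x z u' /\ ad y w v' /\ ad u' v' c.
Proof.
move=> hu hv hc.
have [t [ht hct]] : exists t, ad y v t /\ ad x t c by apply/hadd_assoc; exists u.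
have [v' [hv' htv]] : exists v', ad y w v' /\ ad v' z t.
  apply/hadd_assoc; exists v; split=> //; by apply/hadd_comm.
have [u' [hu' hu'c]] : exists u', ad x z u' /\ ad u' v' c.
  apply/hadd_assoc; exists t; split=> //; by apply/hadd_comm.
by exists u', v'.
Qed.

Section Ideal.
Lemma ideal0 {R : hyperring} (I : R -> Prop) : hyperideal R I -> I (hzero R).
Proof.
move=> [[a Ia] H]; apply: (H a a (hone R)) => //; rewrite hmul_one; exact: hneg_inv.
Qed.

Lemma idealN {R : hyperring} (I : R -> Prop) b : hyperideal R I -> I b -> I (ng b).
Proof.
move=> hI Ib; apply: (hI.2 _ b (hone R) _ (ideal0 _ hI)) => //.
by rewrite hmul_one; apply/hadd_zero.
Qed.

Lemma idealM {R : hyperring} (I : R -> Prop) r b : hyperideal R I -> I b -> I (mu r b).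
Proof.
move=> hI Ib; rewrite -(negK (mu r b)); apply: idealN => //.
apply: (hI.2 _ b r _ (ideal0 _ hI)) => //; exact/hadd_zero.
Qed.

Lemma idealD {R : hyperring} (I : R -> Prop) a b c : hyperideal R I -> I a -> I b -> ad a b c -> I c.
Proof.
move=> hI Ia Ib h; apply: (hI.2 a (ng b) (hone R)) => //; first exact: idealN.
by rewrite hmul_one negK.
Qed.
End Ideal.

Definition pid {R : hyperring} (x : R) : R -> Prop := fun c => exists r, c = mu r x.

Lemma pid_ideal {R : hyperring} (x : R) : hyperideal R (pid x).
Proof.
split; first by exists x, (hone R); rewrite hmul_one.
move=> a b r c [r1 ->] [r2 ->] h.
rewrite hmul_assoc -mulNr in h.
rewrite (hmul_comm _ r1) (hmul_comm _ _ x) in h.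
have [u [_ ->]] := distrB _ _ _ _ h.
by exists u; rewrite hmul_comm.
Qed.

Lemma pid_self {R : hyperring} (x : R) : pid x x.
Proof. by exists (hone R); rewrite hmul_one. Qed.

Definition sumI {R : hyperring} (I J : R -> Prop) : R -> Prop :=
  fun c => exists a b, I a /\ J b /\ ad a b c.

Lemma sumI_ideal {R : hyperring} (I J : R -> Prop) :
  hyperideal R I -> hyperideal R J -> hyperideal R (sumI I J).
Proof.
move=> hI hJ; split.
  exists (hzero R), (hzero R), (hzero R); split; first exact: ideal0.
  split; first exact: ideal0. exact/hadd_zero.
move=> c1 c2 r c [a1 [b1 [Ia1 [Jb1 h1]]]] [a2 [b2 [Ia2 [Jb2 h2]]]] h.
rewrite -mulNr in h.
have h2' := distrF (ng r) _ _ _ h2.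
have [u' [v' [hu [hv hc]]]] := shuffle h1 h2' h.
exists u', v'; split; last split=> //.
  by apply: (hI.2 a1 a2 r) => //; rewrite -mulNr.
by apply: (hJ.2 b1 b2 r) => //; rewrite -mulNr.
Qed.

Lemma sumI_l {R : hyperring} (I J : R -> Prop) a : hyperideal R J -> I a -> sumI I J a.
Proof. move=> hJ Ia; exists a, (hzero R); do 2?split => //; [exact: ideal0| exact/addr0]. Qed.

Lemma sumI_r {R : hyperring} (I J : R -> Prop) b : hyperideal R I -> J b -> sumI I J b.
Proof. move=> hI Jb; exists (hzero R), b; do 2?split => //; [exact: ideal0| exact/hadd_zero]. Qed.
Local Open Scope classical_set_scope.

Lemma exists_max {R : hyperring} (S I0 : R -> Prop) :
  hyperideal R I0 -> (forall x, S x -> ~ I0 x) ->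
  exists P, hyperideal R P /\ (forall x, I0 x -> P x) /\ (forall x, S x -> ~ P x) /\
   (forall Q, hyperideal R Q -> (forall x, P x -> Q x) -> (forall x, S x -> ~ Q x) ->
      forall x, Q x -> P x).
Proof.
move=> hI0 dI0.
pose good (X : set R) := hyperideal R X /\ (forall x, I0 x -> X x) /\ (forall x, S x -> ~ X x).
pose Pg (X : set R) := X = set0 \/ good X.
have gne : forall X x, Pg X -> X x -> good X.
  move=> X x [->|//] //.
have [A [PA Amax]] : exists A, Pg A /\ forall B, A `<` B -> ~ Pg B.
  apply: Zorn_bigcup => F FP Ftot.
  have [[y [X0 FX0 X0y]]|ne] := Classical_Prop.classic (exists y, (\bigcup_(X in F) X) y).
    right; have g0 := gne _ _ (FP _ FX0) X0y.
    split; [split|split].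
    - by exists y, X0.
    - move=> a b r c [X1 FX1 X1a] [X2 FX2 X2b] h.
      have [s12|s21] := Ftot _ _ FX1 FX2.
      + have g2 := gne _ _ (FP _ FX2) X2b.
        exists X2 => //; apply: (g2.1.2 a b r) => //; exact: s12.
      + have g1 := gne _ _ (FP _ FX1) X1a.
        exists X1 => //; apply: (g1.1.2 a b r) => //; exact: s21.
    - by move=> x /g0.2.1 ?; exists X0.
    - move=> x Sx [X FX Xx]; have gX := gne _ _ (FP _ FX) Xx.
      exact: (gX.2.2 x Sx Xx).
  left; rewrite funeqE => x; rewrite propeqE; split => // hx.
  by apply: ne; exists x.
have gA : good A.
  case: PA => // A0.
  exfalso; apply: (Amax I0); last by right; split => //.
  rewrite A0; split; first by move=> ? ?. move=> hsub.
  by have := hsub _ (ideal0 _ hI0).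
exists A; split; first exact: gA.1.
split; first exact: gA.2.1. split; first exact: gA.2.2.
move=> Q hQ AQ dQ x Qx.
apply: NNPP => nAx.
apply: (Amax Q).
  split => // QA; exact: nAx (QA _ Qx).
right; split => //; split => // y /gA.2.1; exact: AQ.
Qed.

Lemma mul4 {R : hyperring} (r2 y r1 x : R) : mu (mu r2 y) (mu r1 x) = mu (mu r2 r1) (mu x y).
Proof.
rewrite -!hmul_assoc; congr (hmul _ r2 _).
by rewrite hmul_assoc (hmul_comm _ y r1) -hmul_assoc (hmul_comm _ y x).
Qed.

Lemma exists_prime {R : hyperring} (S I0 : R -> Prop) :
  (forall s t, S s -> S t -> S (mu s t)) -> S (hone R) ->
  hyperideal R I0 -> (forall x, S x -> ~ I0 x) ->
  exists P, prime_hyperideal R P /\ (forall x, I0 x -> P x) /\ (forall x, S x -> ~ P x).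
Proof.
move=> Smul S1 hI0 dI0.
have [P [hP [I0P [dP maxP]]]] := exists_max S I0 hI0 dI0.
exists P; split; last by split.
split => //; split; first by exists (hone R); apply: dP.
have key : forall z, ~ P z -> exists s p r, S s /\ P p /\ ad p (mu r z) s.
  move=> z nPz; apply: NNPP => hn; apply: nPz.
  apply: (maxP (sumI P (pid z))).
  - exact/sumI_ideal/pid_ideal.
  - by move=> x Px; apply: sumI_l => //; exact: pid_ideal.
  - move=> s Ss [a [b [Pa [[r ->] h]]]]; apply: hn; by exists s, a, r.
  - by apply: sumI_r => //; exact: pid_self.
move=> x y Pxy; apply: NNPP => /not_or_and [nPx nPy].
have [s1 [p1 [r1 [S1' [Pp1 h1]]]]] := key _ nPx.
have [s2 [p2 [r2 [S2' [Pp2 h2]]]]] := key _ nPy.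
apply: (dP (mu s1 s2)); first exact: Smul.
have h := distrF s1 _ _ _ h2.
apply: (idealD _ _ _ _ hP _ _ h); first exact: idealM.
rewrite hmul_comm.
have h' := distrF (mu r2 y) _ _ _ h1.
apply: (idealD _ _ _ _ hP _ _ h'); first exact: idealM.
rewrite mul4; exact: idealM.
Qed.

Fixpoint hpow {R : hyperring} (x : R) (n : nat) : R :=
  match n with 0 => hone R | S n => mu x (hpow x n) end.

Lemma mulACA {R : hyperring} (a b c d : R) : mu (mu a b) (mu c d) = mu (mu a c) (mu b d).
Proof.
rewrite -!hmul_assoc; congr (hmul _ a _).
by rewrite !hmul_assoc (hmul_comm _ b c).
Qed.

Lemma hpowD {R : hyperring} (x : R) n m : hpow x (n + m) = mu (hpow x n) (hpow x m).
Proof.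
elim: n => [|n IH] /=; first by rewrite hmul_one.
by rewrite IH hmul_assoc.
Qed.

Lemma hpow_mul {R : hyperring} (a b : R) n : hpow (mu a b) n = mu (hpow a n) (hpow b n).
Proof.
elim: n => [|n IH] /=; first by rewrite hmul_one.
by rewrite IH mulACA.
Qed.

Lemma one_notin {R : hyperring} (P : R -> Prop) : prime_hyperideal R P -> ~ P (hone R).
Proof.
move=> [hP [[x nPx] _]] P1; apply: nPx; rewrite -(mulr1 x); exact: idealM.
Qed.

Lemma prime_pow {R : hyperring} (P : R -> Prop) x n : prime_hyperideal R P -> P (hpow x n) -> P x.
Proof.
move=> pP; elim: n => [|n IH] /= h; first by exfalso; exact: one_notin pP h.
by case: (pP.2.2 _ _ h) => // /IH.
Qed.

Lemma pow_in {R : hyperring} (P : R -> Prop) x n : hyperideal R P -> P x -> P (hpow x (S n)).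
Proof. move=> hP Px /=; rewrite hmul_comm; exact: idealM. Qed.

Lemma one_S {R : hyperring} : forall s t : R, s = hone R -> t = hone R -> hmul R s t = hone R.
Proof. by move=> s t -> ->; rewrite hmul_one. Qed.

Theorem proposition3p22 (R : hyperring) :
  Spec_disconnected R <->
  exists e : R, hmul R e e = e /\ e <> hzero R /\ e <> hone R.
Proof.
split.
- move=> [A [B [[I [hI AI]] [[J [hJ BJ]] [[pA [ppA ApA]] [[pB [ppB BpB]] [disj cover]]]]]]].
  have [a [b [Ia [Jb hab]]]] : exists a b, I a /\ J b /\ hadd R a b (hone R).
    apply: NNPP => hn.
    have : forall x, x = hone R -> ~ sumI I J x.
      move=> x -> [a [b [Ia [Jb h]]]]; apply: hn; by exists a, b.
    move/(exists_prime (fun s => s = hone R) (sumI I J) one_S (erefl _) (sumI_ideal _ _ hI hJ)).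
    move=> [p [pp [sub _]]].
    apply: (disj p pp); split.
    + apply/(AI p pp) => x Ix; apply: sub; exact: sumI_l.
    + apply/(BJ p pp) => x Jx; apply: sub; exact: sumI_r.
  have abP : forall p, prime_hyperideal R p -> p (hmul R a b).
    move=> p pp; case: (cover p pp) => [/(AI p pp) H|/(BJ p pp) H].
    + rewrite hmul_comm; apply: idealM; [exact: pp.1 | exact: H].
    + apply: idealM; [exact: pp.1 | exact: H].
  have [n hn0] : exists n, hpow (hmul R a b) n = hzero R.
    apply: NNPP => hn.
    have hZ : hyperideal R (fun c => c = hzero R).
      split; first by exists (hzero R).
      move=> x y r c -> ->; rewrite mulr0 neg0; by move/hadd_zero.
    have Smul : forall s t, (exists n, s = hpow (hmul R a b) n) ->
        (exists n, t = hpow (hmul R a b) n) -> exists n, hmul R s t = hpow (hmul R a b) n.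
      move=> s t [n1 ->] [n2 ->]; exists (n1 + n2)%nat; by rewrite hpowD.
    have : forall x, (exists n, x = hpow (hmul R a b) n) -> ~ x = hzero R.
      move=> x [k ->] e; apply: hn; by exists k.
    move/(exists_prime (fun s => exists n, s = hpow (hmul R a b) n) (fun c => c = hzero R) Smul
      (ex_intro _ 0%nat (erefl _)) hZ) => [p [pp [_ dp]]].
    apply: (dp (hmul R a b)); last exact: abP.
    by exists 1%nat; rewrite /= mulr1.
  case: n hn0 => [|n] hn0.
    by exfalso; apply: (hzero_neq_one R); rewrite -hn0.
  have [x [y [[r1 ->] [[r2 ->] h1]]]] :
      sumI (pid (hpow a (S n))) (pid (hpow b (S n))) (hone R).
    apply: NNPP => hn.
    have : forall x, x = hone R -> ~ sumI (pid (hpow a (S n))) (pid (hpow b (S n))) x.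
      by move=> x ->.
    move/(exists_prime (fun s => s = hone R) _ one_S
      (erefl _) (sumI_ideal _ _ (pid_ideal (hpow a (S n))) (pid_ideal (hpow b (S n))))).
    move=> [p [pp [sub _]]].
    apply: (one_notin _ pp); apply: (idealD _ a b _ pp.1 _ _ hab).
    + apply: (prime_pow _ _ (S n) pp); apply: sub; apply: sumI_l;
        [exact: pid_ideal | exact: pid_self].
    + apply: (prime_pow _ _ (S n) pp); apply: sub; apply: sumI_r;
        [exact: pid_ideal | exact: pid_self].
  have ef0 : hmul R (hmul R r1 (hpow a (S n))) (hmul R r2 (hpow b (S n))) = hzero R.
    by rewrite mulACA -hpow_mul hn0 mulr0.
  exists (hmul R r1 (hpow a (S n))); split; [|split].
  + have := distrF (hmul R r1 (hpow a (S n))) _ _ _ h1.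
    by rewrite ef0 mulr1 => /addr0.
  + move=> e0; rewrite e0 in h1; move/hadd_zero: h1 => f1.
    apply: (one_notin _ ppB); rewrite f1; apply: idealM; first exact: ppB.1.
    apply: pow_in; first exact: ppB.1.
    by apply: (proj1 (BJ pB ppB) BpB).
  + move=> e1; apply: (one_notin _ ppA); rewrite -e1; apply: idealM; first exact: ppA.1.
    apply: pow_in; first exact: ppA.1.
    by apply: (proj1 (AI pA ppA) ApA).
- move=> [e [ee [e0 e1]]].
  have : hadd R (hmul R e (hone R)) (hmul R e (hneg R e)) (hzero R).
    rewrite mulr1 mulrN ee; exact: hneg_inv.
  move/distrB => [u [hu hu0]].
  have heu : hadd R e u (hone R) by apply/hadd_rev.
  exists (V R (pid e)), (V R (pid u)).
  split; first by exists (pid e); split; [exact: pid_ideal | move=> p _].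
  split; first by exists (pid u); split; [exact: pid_ideal | move=> p _].
  split.
    suff : forall x, x = hone R -> ~ pid e x.
      move/(exists_prime (fun s => s = hone R) (pid e) one_S (erefl _) (pid_ideal e)).
      move=> [p [pp [sub _]]]; by exists p; split.
    move=> x -> [r H]; apply: e1.
    have : hmul R (hone R) e = hmul R (hmul R r e) e by rewrite -H.
    by rewrite hmul_one -hmul_assoc ee -H.
  split.
    suff : forall x, x = hone R -> ~ pid u x.
      move/(exists_prime (fun s => s = hone R) (pid u) one_S (erefl _) (pid_ideal u)).
      move=> [p [pp [sub _]]]; by exists p; split.
    move=> x -> [r H]; apply: e0.
    have : hmul R e (hone R) = hmul R e (hmul R r u) by rewrite -H.
    by rewrite mulr1 hmul_assoc (hmul_comm _ e r) -hmul_assoc -hu0 mulr0.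
  split.
    move=> p pp [Ap Bp]; apply: (one_notin _ pp).
    apply: (idealD _ e u _ pp.1 _ _ heu); [apply: Ap; exact: pid_self| apply: Bp; exact: pid_self].
  move=> p pp.
  have : p (hmul R e u) by rewrite -hu0; exact: ideal0 _ pp.1.
  case/(pp.2.2) => H; [left|right] => c [r ->]; exact: idealM _ _ _ pp.1 H.
Qed.
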